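(* Let $X$ be a separable Hilbert space, $N\ge1$, and $F\subset H^2(\mathbb{D},X)$ a family of functions. Then $F$ is cyclic for $S^*$ in $H^2(\mathbb{D},X)$ if and only if the family $\{\Psi_N(S^{*j}f): f\in F,\ 0\le j\le N-1\}$ is cyclic for $S^*$ in $H^2(\mathbb{D},X^N)$.
   Context: $\Psi_N:H^2(\mathbb{D},X)\to H^2(\mathbb{D},X^N)$ is defined by $\Psi_N(f)(z)=\sum_{k\ge0}\big(\hat f(Nk),\hat f(Nk+1),\dots,\hat f(Nk+N-1)\big)z^k$. $S^*$ is the backward shift; a family $G$ is cyclic if the closed span of $\{S^{*n}g:n\ge0,g\in G\}$ is the whole space. *)

(* Defs.v *)
From Stdlib Require Import Reals.
From mathcomp Require Import all_boot.

Set Implicit Arguments.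
Unset Strict Implicit.

Open Scope R_scope.

Record C := mkC { Cre : R ; Cim : R }.
Definition C0 : C := mkC 0 0.
Definition C1 : C := mkC 1 0.
Definition Cadd (a b : C) : C := mkC (Cre a + Cre b) (Cim a + Cim b).
Definition Cmul (a b : C) : C :=
  mkC (Cre a * Cre b - Cim a * Cim b) (Cre a * Cim b + Cim a * Cre b).
Definition Cconj (a : C) : C := mkC (Cre a) (- Cim a).

Record HilbertSpace := {
  hT :> Type;
  hadd : hT -> hT -> hT;
  hzero : hT;
  hopp : hT -> hT;
  hscal : C -> hT -> hT;
  hinner : hT -> hT -> C;
  haddA : forall x y z, hadd x (hadd y z) = hadd (hadd x y) z;
  haddC : forall x y, hadd x y = hadd y x;
  hadd0 : forall x, hadd x hzero = x;
  haddN : forall x, hadd x (hopp x) = hzero;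
  hscal1 : forall x, hscal C1 x = x;
  hscalA : forall a b x, hscal a (hscal b x) = hscal (Cmul a b) x;
  hscalDr : forall a x y, hscal a (hadd x y) = hadd (hscal a x) (hscal a y);
  hscalDl : forall a b x, hscal (Cadd a b) x = hadd (hscal a x) (hscal b x);
  hinnerD : forall x y z, hinner (hadd x y) z = Cadd (hinner x z) (hinner y z);
  hinnerZ : forall a x y, hinner (hscal a x) y = Cmul a (hinner x y);
  hinnerC : forall x y, hinner y x = Cconj (hinner x y);
  hinner_ge0 : forall x, 0 <= Cre (hinner x x);
  hinner_eq0 : forall x, hinner x x = C0 -> x = hzero;
  hcomplete : forall u : nat -> hT,
    (forall eps, 0 < eps -> exists M, forall m n, (M <= m)%coq_nat -> (M <= n)%coq_nat ->
        sqrt (Cre (hinner (hadd (u m) (hopp (u n))) (hadd (u m) (hopp (u n))))) < eps) ->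
    exists x, forall eps, 0 < eps -> exists M, forall n, (M <= n)%coq_nat ->
        sqrt (Cre (hinner (hadd (u n) (hopp x)) (hadd (u n) (hopp x)))) < eps;
  hseparable : exists d : nat -> hT, forall x eps, 0 < eps -> exists n,
        sqrt (Cre (hinner (hadd x (hopp (d n))) (hadd x (hopp (d n))))) < eps
}.

Definition hnorm (X : HilbertSpace) (x : X) : R := sqrt (Cre (hinner x x)).

(* ---------- Coefficient spaces: a complex vector space together with the
   squared norm used to form H^2(D, V) = { sum a_n z^n : sum ||a_n||^2 < oo } ---------- *)
Record CoefSpace := {
  cT :> Type;
  cadd : cT -> cT -> cT;
  czero : cT;
  copp : cT -> cT;
  cscal : C -> cT -> cT;
  cnorm2 : cT -> R
}.

Definition coefX (X : HilbertSpace) : CoefSpace :=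
  {| cT := hT X; cadd := @hadd X; czero := @hzero X; copp := @hopp X;
     cscal := @hscal X; cnorm2 := fun x => Rsqr (hnorm x) |}.

Definition coefXN (X : HilbertSpace) (N : nat) : CoefSpace :=
  {| cT := 'I_N -> hT X;
     cadd := fun u v i => hadd (u i) (v i);
     czero := fun _ => hzero X;
     copp := fun u i => hopp (u i);
     cscal := fun a u i => hscal a (u i);
     cnorm2 := fun u => \big[Rplus/R0]_(i < N) Rsqr (hnorm (u i)) |}.

(* An element of H^2(D,V) is identified with its sequence of Taylor coefficients
   f(z) = sum_n (f n) z^n ; membership = square summability of the coefficient norms. *)
Definition in_H2 (V : CoefSpace) (f : nat -> V) : Prop :=
  exists l, infinite_sum (fun n => cnorm2 (f n)) l.

(* Backward shift S^* (f(z) - f(0))/z : coefficients shift left. *)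
Definition Sstar (V : CoefSpace) (f : nat -> V) : nat -> V := fun n => f (S n).

Inductive in_orbit_span (V : CoefSpace) (G : (nat -> V) -> Prop) : (nat -> V) -> Prop :=
  | orbit_span0 : in_orbit_span G (fun _ => czero V)
  | orbit_spanS : forall (c : C) (n : nat) (g p : nat -> V),
      G g -> in_orbit_span G p ->
      in_orbit_span G (fun k => cadd (cscal c (Nat.iter n (@Sstar V) g k)) (p k)).

(* G is cyclic for S^* in H^2(D,V): the closed linear span of {S^{*n} g} is all of
   H^2(D,V), i.e. this span is dense in the H^2 norm ||h|| = sqrt (sum_n ||h_n||^2). *)
Definition cyclic (V : CoefSpace) (G : (nat -> V) -> Prop) : Prop :=
  forall h : nat -> V, in_H2 h -> forall eps, 0 < eps ->
    exists p, in_orbit_span G p /\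
      exists l, infinite_sum (fun n => cnorm2 (cadd (h n) (copp (p n)))) l /\ sqrt l < eps.

Definition Psi (X : HilbertSpace) (N : nat) (f : nat -> coefX X) : nat -> coefXN X N :=
  fun k i => f (N * k + i)%N.
Arguments Psi {X} N f k i.

(* Main.v *)
Require Import Defs.
From Stdlib Require Import Reals Lra Lia FunctionalExtensionality.
From mathcomp Require Import all_boot.

From HB Require Import structures.
Open Scope R_scope.

HB.instance Definition _ := Monoid.isComLaw.Build R R0 Rplus (fun x y z => esym (Rplus_assoc x y z)) Rplus_comm Rplus_0_l.

Fixpoint psum (a : nat -> R) (n : nat) : R :=
  match n with O => 0 | S n => psum a n + a n end.

Lemma sum_psum a n : sum_f_R0 a n = psum a (S n).
Proof. induction n as [|n IH]; simpl; [ring| rewrite IH; simpl; ring]. Qed.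

Lemma blk a s j : \big[Rplus/R0]_(i < j) a (s + i)%N = psum a (s + j)%N - psum a s.
Proof.
elim: j => [|j IH]; first by rewrite big_ord0 addn0; ring.
rewrite big_ord_recr /= IH addnS /=; ring.
Qed.

Lemma gsum a N K :
  sum_f_R0 (fun k => \big[Rplus/R0]_(i < N) a (N * k + i)%N) K = psum a (N * K.+1)%N.
Proof.
elim: K => [|K IH] /=.
  rewrite blk muln0 add0n muln1 /=; ring.
rewrite IH blk (mulnS N K.+1) (addnC N); ring.
Qed.

Lemma psum_mono a (Ha : forall m, 0 <= a m) m n : (m <= n)%N -> psum a m <= psum a n.
Proof.
elim: n => [|n IH]; first by rewrite leqn0 => /eqP ->; lra.
rewrite leq_eqVlt => /orP [/eqP -> | H]; first lra.
have := IH H; have := Ha n; simpl; lra.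
Qed.

Lemma group_sum (a : nat -> R) (N : nat) (HN : (0 < N)%N) (Ha : forall m, 0 <= a m) l :
  infinite_sum a l <-> infinite_sum (fun k => \big[Rplus/R0]_(i < N) a (N * k + i)%N) l.
Proof.
split => H eps He; have [M HM] := H eps He.
- exists M => K HK; rewrite gsum.
  have Hle : (K.+1 <= N * K.+1)%N by rewrite leq_pmull.
  move: Hle; case E: (N * K.+1)%N => [|n'] // Hle.
  rewrite -sum_psum; apply HM; move/leP: Hle => Hle; lia.
- exists (N * M.+1)%N => n Hn; rewrite sum_psum.
  set K := (n.+1 %/ N)%N.
  have H1 : (N * K <= n.+1)%N by rewrite mulnC leq_divM.
  have H2 : (n.+1 < N * K.+1)%N by rewrite mulnC ltn_ceil.
  have H3 : (N * M.+1 <= n)%N by apply/leP.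
  have H4 : (M.+1 < K.+1)%N.
    rewrite -(ltn_pmul2l HN); apply: leq_ltn_trans H2; exact: leq_trans H3 _.
  have HK : (M <= K)%coq_nat by move/ltP: H4; lia.
  have A := HM K HK; rewrite gsum in A.
  destruct K as [|K']; first by move/ltP: H4; lia.
  have HK' : (M <= K')%coq_nat by move/ltP: H4; lia.
  have B := HM K' HK'; rewrite gsum in B.
  have C1 := @psum_mono a Ha _ _ H1. have C2 := @psum_mono a Ha _ _ (ltnW H2).
  unfold Rdist in *.
  apply Rabs_def2 in A; apply Rabs_def2 in B; apply Rabs_def1; lra.
Qed.

Arguments group_sum {a N} HN Ha {l}.

Lemma iterS (V : CoefSpace) n (g : nat -> V) m : Nat.iter n (@Sstar V) g m = g (n + m)%N.
Proof. elim: n m => [|n IH] m //=; rewrite /Sstar IH addnS addSn. by []. Qed.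

Definition Gfam (X : HilbertSpace) (N : nat) (F : (nat -> coefX X) -> Prop) :=
  fun b : nat -> coefXN X N =>
    exists f j, F f /\ (j < N)%N /\ b = Psi N (Nat.iter j (@Sstar (coefX X)) f).

Arguments Gfam {X} N F _.

Lemma span_psi X N (HN : (0 < N)%N) F p :
  in_orbit_span (V := coefX X) F p -> in_orbit_span (V := coefXN X N) (Gfam N F) (Psi N p).
Proof.
elim => [|c n g q Hg Hq IH]; first by apply: orbit_span0.
set r := (n %% N)%N; set s := (n %/ N)%N.
have E : Psi N (fun k => cadd (cscal c (Nat.iter n (@Sstar (coefX X)) g k)) (q k)) =
  (fun k => @cadd (coefXN X N) (cscal c (Nat.iter s (@Sstar (coefXN X N))
        (Psi N (Nat.iter r (@Sstar (coefX X)) g)) k)) (Psi N q k)).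
  apply: functional_extensionality => k; apply: functional_extensionality => i.
  rewrite /= (iterS (coefXN X N)); unfold Psi; cbv beta; rewrite !(iterS (coefX X)); do 3 f_equal.
  rewrite {1}(divn_eq n N) -/r -/s -!plusE -!multE; lia.
rewrite E; apply: orbit_spanS => //.
by exists g, r; split => //; split => //; rewrite ltn_pmod.
Qed.

Lemma span_unpsi X N F q :
  in_orbit_span (V := coefXN X N) (Gfam N F) q ->
  exists p, in_orbit_span (V := coefX X) F p /\ q = Psi N p.
Proof.
elim => [|c n b q' Hb Hq [p [Hp ->]]].
  by exists (fun _ => hzero X); split => //; apply: orbit_span0.
have [f [j [Hf [Hj ->]]]] := Hb.
exists (fun m => @cadd (coefX X) (cscal c (Nat.iter (n * N + j) (@Sstar (coefX X)) f m)) (p m)).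
split; first by apply: orbit_spanS.
apply: functional_extensionality => k; apply: functional_extensionality => i.
rewrite /= (iterS (coefXN X N)); unfold Psi; cbv beta; rewrite !(iterS (coefX X)); do 3 f_equal.
rewrite -!plusE -!multE; lia.
Qed.

Lemma inv_eq X N (H : nat -> coefXN X N) a k (o i : 'I_N) :
  a = k -> val o = val i -> H a o = H k i.
Proof. by move=> -> /val_inj ->. Qed.

Theorem mainTheorem15 (X : HilbertSpace) (N : nat) (F : (nat -> coefX X) -> Prop) :
  (1 <= N)%N ->
  (forall f, F f -> in_H2 f) ->
  (cyclic F <->
   cyclic (V := coefXN X N)
     (fun b => exists f j, F f /\ (j < N)%N /\ b = Psi N (Nat.iter j (@Sstar (coefX X)) f))).
Proof.
move=> HN _; split => Hc.
- move=> H [l Hl] eps He.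
  pose h : nat -> coefX X := fun m => H (m %/ N)%N (Ordinal (ltn_pmod m HN)).
  have Hh : forall k (i : 'I_N), h (N * k + i)%N = H k i.
    move=> k i; apply: inv_eq => /=.
      by rewrite mulnC divnMDl // divn_small // addn0.
    by rewrite mulnC modnMDl modn_small.
  have hH2 : in_H2 h.
    exists l; apply/(group_sum HN (fun m => Rle_0_sqr (hnorm (h m)))).
    have -> : (fun k => \big[Rplus/R0]_(i < N) Rsqr (hnorm (h (N * k + i)%N))) =
              (fun n => cnorm2 (H n)).
      apply: functional_extensionality => k /=; apply: eq_bigr => i _; by rewrite Hh.
    exact Hl.
  have [p [Hp [l' [Hs Hl']]]] := Hc h hH2 eps He.
  exists (Psi N p); split; first exact: span_psi.
  exists l'; split => //.
  move/(group_sum HN (fun m => Rle_0_sqr (hnorm (hadd (h m) (hopp (p m)))))): Hs.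
  have -> : (fun k => \big[Rplus/R0]_(i < N)
      Rsqr (hnorm (hadd (h (N * k + i)%N) (hopp (p (N * k + i)%N))))) =
    (fun n => cnorm2 (@cadd (coefXN X N) (H n) (copp (Psi N p n)))).
    apply: functional_extensionality => k /=; apply: eq_bigr => i _; by rewrite Hh.
  by [].
- move=> h [l Hl] eps He.
  have hH2 : in_H2 (V := coefXN X N) (Psi N h).
    exists l; exact/(group_sum HN (fun m => Rle_0_sqr (hnorm (h m)))).
  have [q [Hq [l' [Hs Hl']]]] := Hc _ hH2 eps He.
  have [p [Hp Eq]] := @span_unpsi X N F q Hq; subst q.
  exists p; split => //; exists l'; split => //.
  exact/(group_sum HN (fun m => Rle_0_sqr (hnorm (hadd (h m) (hopp (p m)))))).
Qed.
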